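(* Let $m,n$ be positive integers, $r$ an integer with $1\leq r\leq\min\{m,n\}$ if $m\neq n$ and $1\le r\le n-1$ if $m=n$, and $a\in\{0,\dots,r\}$. Let $Q(\lambda)$ be an $m\times n$ complex matrix pencil with normal rank at most $r$. If $Q\in\overline{{\cal O}({\cal K}_a^{m\times n})}$, then $Q(\lambda)^T\in\overline{{\cal O}({\cal K}_{r-a}^{n\times m})}$.
   Context: A matrix pencil is $A+\lambda B$ with complex matrices; normal rank is rank over $\mathbb{C}(\lambda)$. ${\cal O}(Q)$ denotes the orbit of $Q$ under strict equivalence ($Q\mapsto EQF$, $E,F$ constant invertible) and the bar denotes closure in the space of pencils of the given size. $L_k$ is the $k\times(k+1)$ pencil with $\lambda$ at $(i,i)$ and $1$ at $(i,i+1)$. For sizes $p\times q$ and $b\in\{0,\dots,r\}$, ${\cal K}_b^{p\times q}$ is defined by the Euclidean divisions $b=\alpha(q-r)+s$ ($0\le s<q-r$), $r-b=\beta(p-r)+t$ ($0\le t<p-r$), as the $p\times q$ block-diagonal pencil with $s$ blocks $L_{\alpha+1}$, $q-r-s$ blocks $L_\alpha$, $t$ blocks $L_{\beta+1}^T$ and $p-r-t$ blocks $L_\beta^T$. *)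

(* Defs.v *)
(* complex numbers are R[i] for R : realType (= the field C). *)
From HB Require Import structures.
From mathcomp Require Import all_boot all_order all_algebra.
From mathcomp Require Import reals.
From mathcomp Require Import complex fraction.
Set Implicit Arguments. Unset Strict Implicit. Unset Printing Implicit Defensive.
Import Order.TTheory GRing.Theory Num.Theory.
Local Open Scope ring_scope.

(* A p x q pencil A + lambda B is represented by the pair (A, B). *)
Definition pencil (C : Type) (p q : nat) := ('M[C]_(p, q) * 'M[C]_(p, q))%type.

Definition pencil_tr (C : Type) p q (Q : pencil C p q) : pencil C q p :=
  ((Q.1)^T, (Q.2)^T).

Definition normal_rank (C : fieldType) p q (Q : pencil C p q) : nat :=
  \rank (\matrix_(i < p, j < q)
           (tofrac (((Q.1 i j)%:P + 'X * (Q.2 i j)%:P) : {poly C})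
             : {fraction {poly C}})).

(* Closure of the strict-equivalence orbit O(K), in the Euclidean topology of
   the space of pencils (C^(2pq)), written out with the max-entry norm:
   Q is in the closure iff every neighbourhood of Q meets O(K). *)
Definition in_orbit_closure (R : realType) p q (Q K : pencil R[i] p q) : Prop :=
  forall eps : R, 0 < eps ->
    exists (E : 'M[R[i]]_p) (F : 'M[R[i]]_q),
      [/\ E \in unitmx, F \in unitmx &
          forall (i : 'I_p) (j : 'I_q),
            `|(E *m K.1 *m F - Q.1) i j| < (eps%:C)%C /\
            `|(E *m K.2 *m F - Q.2) i j| < (eps%:C)%C].

(* A block (false, k) is L_k (k x (k+1)), a block
   (true, k) is L_k^T ((k+1) x k).  L_k has lambda at (i,i) and 1 at (i,i+1),
   i.e. A-part 1 at (i,i+1), B-part 1 at (i,i).  bd_entry bs i j returns the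
   (A-entry, B-entry) at position (i,j) of the block-diagonal direct sum. *)
Fixpoint bd_entry (C : pzRingType) (bs : seq (bool * nat)) (i j : nat) : C * C :=
  match bs with
  | [::] => (0, 0)
  | (tr, k) :: bs' =>
      let rs := if tr then k.+1 else k in
      let cs := if tr then k else k.+1 in
      if (i < rs)%N && (j < cs)%N then
        (if tr then (((i == j.+1) : nat)%:R, ((i == j) : nat)%:R)
               else (((j == i.+1) : nat)%:R, ((i == j) : nat)%:R))
      else if (rs <= i)%N && (cs <= j)%N then bd_entry C bs' (i - rs) (j - cs)
      else (0, 0)
  end.

(* The list of blocks of K_b^{p x q} (rank r):
   b = alpha (q-r) + s, r - b = beta (p-r) + t. *)
Definition K_blocks (p q r b : nat) : seq (bool * nat) :=
  let alpha := (b %/ (q - r))%N in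
  let s := (b %% (q - r))%N in
  let beta := ((r - b) %/ (p - r))%N in
  let t := ((r - b) %% (p - r))%N in
  nseq s (false, alpha.+1) ++ nseq (q - r - s)%N (false, alpha)
  ++ nseq t (true, beta.+1) ++ nseq (p - r - t)%N (true, beta).

(* The Euclidean divisions defining K_b^{p x q} make sense (division by
   q - r, resp. p - r, is only meaningful when the divisor is positive or the
   dividend is 0, in which case there are no blocks of that kind). *)
Definition K_wf (p q r b : nat) : bool :=
  ((r < q)%N || (b == 0%N)) && ((r < p)%N || (r - b == 0)%N).

Definition Kpencil (C : pzRingType) (p q r b : nat) : pencil C p q :=
  (\matrix_(i < p, j < q) (bd_entry C (K_blocks p q r b) i j).1,
   \matrix_(i < p, j < q) (bd_entry C (K_blocks p q r b) i j).2).

(* Main.v *)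
Require Import Defs.
From HB Require Import structures.
From mathcomp Require Import all_boot all_order all_algebra.
From mathcomp Require Import reals complex zify fingroup perm.
Import Order.TTheory GRing.Theory Num.Theory.
Local Open Scope nat_scope.

Section BD.
Variable C : pzRingType.

Definition rsz (b : bool * nat) := if b.1 then b.2.+1 else b.2.
Definition csz (b : bool * nat) := if b.1 then b.2 else b.2.+1.
Definition rows (bs : seq (bool * nat)) := sumn (map rsz bs).
Definition cols (bs : seq (bool * nat)) := sumn (map csz bs).
Definition trb (bs : seq (bool * nat)) := map (fun b => (~~ b.1, b.2)) bs.

Lemma bd_out bs i j : (rows bs <= i) || (cols bs <= j) -> bd_entry C bs i j = (0, 0)%R.
Proof.
elim: bs i j => [|[tr k] bs IH] i j //=.
rewrite /rows /cols /= => H.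
have Hr : (if tr then k.+1 else k) = rsz (tr, k) by [].
have Hc : (if tr then k else k.+1) = csz (tr, k) by [].
rewrite Hr Hc.
case: ifP => [/andP [H1 H2]|_]; first by exfalso; move: H H1 H2; lia.
case: ifP => [/andP [H1 H2]|_] //.
apply: IH; rewrite /rows /cols; move: H H1 H2; lia.
Qed.

Lemma bd_cat X Y i j : bd_entry C (X ++ Y) i j =
  if (rows X <= i) && (cols X <= j) then bd_entry C Y (i - rows X) (j - cols X)
  else bd_entry C X i j.
Proof.
elim: X i j => [|[tr k] X IH] i j /=; first by rewrite /rows /cols /= !subn0.
rewrite /rows /cols /=.
have Hr : (if tr then k.+1 else k) = rsz (tr, k) by [].
have Hc : (if tr then k else k.+1) = csz (tr, k) by [].
rewrite Hr Hc IH /rows /cols.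
set a := rsz (tr, k); set b := csz (tr, k).
set rX := sumn _; set cX := sumn _.
case: (ltnP i a) => Hi; case: (ltnP j b) => Hj /=.
- rewrite [X in _ = X]ifF //; lia.
- rewrite [X in _ = X]ifF //; lia.
- rewrite [X in _ = X]ifF //; lia.
- case: ifP => H; case: ifP => H' //; try (exfalso; move: H H'; lia).
  by rewrite !subnDA.
Qed.

Lemma bd_tr bs i j : bd_entry C (trb bs) j i = bd_entry C bs i j.
Proof.
elim: bs i j => [|[tr k] bs IH] i j //=.
case: tr => /=; rewrite andbC; case: ifP => _; rewrite ?(eq_sym i j) //;
  rewrite andbC; case: ifP => _ //.
Qed.

Lemma rows_trb bs : rows (trb bs) = cols bs.
Proof. by elim: bs => [|[[] k] bs IH] //=; move: IH; rewrite /rows /cols /= => ->. Qed.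
Lemma cols_trb bs : cols (trb bs) = rows bs.
Proof. by elim: bs => [|[[] k] bs IH] //=; move: IH; rewrite /rows /cols /= => ->. Qed.

Definition swp (a b i : nat) := if i < a then i + b else i - a.

Lemma swp_lt a b p i : a + b = p -> i < p -> swp a b i < p.
Proof. rewrite /swp; case: ifP; lia. Qed.

Definition swpo a b p (e : a + b = p) (i : 'I_p) : 'I_p :=
  Ordinal (@swp_lt a b p i e (ltn_ord i)).

Lemma swpo_inj a b p (e : a + b = p) : injective (@swpo a b p e).
Proof.
move=> [x Hx] [y Hy] /(congr1 val) /=; rewrite /swp => H.
apply: val_inj => /=; move: H; do 2 case: ifP; lia.
Qed.

Lemma bd_swap X Y i j : i < rows X + rows Y -> j < cols X + cols Y ->
  bd_entry C (X ++ Y) i j =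
  bd_entry C (Y ++ X) (swp (rows X) (rows Y) i) (swp (cols X) (cols Y) j).
Proof.
move=> Hi Hj; rewrite !bd_cat /swp.
case: (ltnP i (rows X)) => H1; case: (ltnP j (cols X)) => H2.
- rewrite /= ifT; last lia. by rewrite !addnK.
- rewrite /= ifF; last lia. rewrite !bd_out //; lia.
- rewrite /= ifF; last lia. rewrite !bd_out //; lia.
- rewrite /= ifF; last lia. done.
Qed.

End BD.

Lemma rows_cat X Y : rows (X ++ Y) = rows X + rows Y.
Proof. by rewrite /rows map_cat sumn_cat. Qed.
Lemma cols_cat X Y : cols (X ++ Y) = cols X + cols Y.
Proof. by rewrite /cols map_cat sumn_cat. Qed.
Lemma rows_nseq c b : rows (nseq c b) = c * rsz b.
Proof. by rewrite /rows map_nseq; elim: c => //= c ->; rewrite mulSn. Qed.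
Lemma cols_nseq c b : cols (nseq c b) = c * csz b.
Proof. by rewrite /cols map_nseq; elim: c => //= c ->; rewrite mulSn. Qed.

Lemma div_facts a N : (N > 0) || (a == 0) ->
  a = a %/ N * N + a %% N /\ a %% N <= N.
Proof.
move=> H; split; first exact: divn_eq.
case/orP: H => H; first by apply: ltnW; rewrite ltn_mod.
by rewrite (eqP H) mod0n.
Qed.

Lemma arith a r N M s s' t t' al be n m : n = N + r -> m = M + r ->
  N = s + s' -> M = t + t' -> a = al * N + s -> r - a = be * M + t -> a <= r ->
  s * al.+2 + s' * al.+1 + (t * be.+1 + t' * be) = n /\
  s * al.+1 + s' * al + (t * be.+2 + t' * be.+1) = m.
Proof.
move=> -> -> -> -> E1 E2 Har.
move: E1 E2; rewrite !mulnS !mulnDr [al * s]mulnC [al * s']mulnC [be * t]mulnC [be * t']mulnC.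
move: (s * al) (s' * al) (t * be) (t' * be) => x y z w.
lia.
Qed.

Lemma KB_sizes m n r a : a <= r -> r <= n -> r <= m -> K_wf m n r a ->
  rows (K_blocks m n r a) = m /\ cols (K_blocks m n r a) = n.
Proof.
move=> Har Hrn Hrm /andP [H1 H2].
have [E1 S1] := @div_facts a (n - r) ltac:(move: H1; lia).
have [E2 S2] := @div_facts (r - a) (m - r) ltac:(move: H2; lia).
rewrite /K_blocks !rows_cat !cols_cat !rows_nseq !cols_nseq /rsz /csz /=.
move: E1 S1 E2 S2.
set al := a %/ (n - r); set s := a %% (n - r).
set be := (r - a) %/ (m - r); set t := (r - a) %% (m - r).
move=> E1 S1 E2 S2.
have [] := @arith a r (n - r) (m - r) s (n - r - s) t (m - r - t) al be n m.
1-7: lia.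
move=> A B; split; lia.
Qed.

Lemma KB_tr m n r a : a <= r ->
  let XX := nseq (a %% (n - r)) (true, (a %/ (n - r)).+1)
            ++ nseq (n - r - a %% (n - r)) (true, a %/ (n - r)) in
  let YY := nseq ((r - a) %% (m - r)) (false, ((r - a) %/ (m - r)).+1)
            ++ nseq (m - r - (r - a) %% (m - r)) (false, (r - a) %/ (m - r)) in
  trb (K_blocks m n r a) = XX ++ YY /\ K_blocks n m r (r - a) = YY ++ XX.
Proof.
move=> Har XX YY; split.
  by rewrite /K_blocks /trb !map_cat !map_nseq /= catA.
by rewrite /K_blocks subKn // catA.
Qed.

Lemma Kperm (C : pzRingType) m n r a : a <= r -> r <= n -> r <= m -> K_wf m n r a ->
  exists (s : 'S_n) (t : 'S_m),
   ((Kpencil C m n r a).1^T = row_perm s (col_perm t (Kpencil C n m r (r - a)).1))%R /\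
   ((Kpencil C m n r a).2^T = row_perm s (col_perm t (Kpencil C n m r (r - a)).2))%R.
Proof.
move=> Har Hrn Hrm Hwf.
have [Hr Hc] := @KB_sizes m n r a Har Hrn Hrm Hwf.
have [E1 E2] := @KB_tr m n r a Har.
move: E1 E2.
set XX := (X in trb _ = X ++ _); set YY := (Y in trb _ = _ ++ Y) => E1 E2.
have er : rows XX + rows YY = n by rewrite -rows_cat -E1 rows_trb.
have ec : cols XX + cols YY = m by rewrite -cols_cat -E1 cols_trb.
exists (perm.perm (@swpo_inj _ _ _ er)), (perm.perm (@swpo_inj _ _ _ ec)).
have key : forall (i : 'I_n) (j : 'I_m),
  bd_entry C (K_blocks m n r a) j i =
  bd_entry C (K_blocks n m r (r - a)) (perm.perm (@swpo_inj _ _ _ er) i) (perm.perm (@swpo_inj _ _ _ ec) j).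
  move=> i j; rewrite -bd_tr E1 E2 !perm.permE /= bd_swap //.
  - by rewrite er.
  - by rewrite ec.
by split; apply/matrixP => i j; rewrite !mxE key.
Qed.

Lemma trB_entry (C : pzRingType) p q (A B : 'M[C]_(p, q)) i j :
  ((A^T - B^T) i j = (A - B) j i)%R.
Proof. by rewrite !mxE. Qed.

Local Open Scope ring_scope.

Theorem lemma3p8 (R : realType) (m n r a : nat) (Q : pencil R[i] m n) :
  (0 < m)%N -> (0 < n)%N -> (1 <= r)%N ->
  (m <> n -> (r <= minn m n)%N) -> (m = n -> (r <= n - 1)%N) ->
  (a <= r)%N ->
  K_wf m n r a ->
  (normal_rank Q <= r)%N ->
  in_orbit_closure Q (Kpencil R[i] m n r a) ->
  in_orbit_closure (pencil_tr Q) (Kpencil R[i] n m r (r - a)).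
Proof.
move=> Hm Hn Hr Hmn1 Hmn2 Har Hwf _ Hcl eps Heps.
have [Hrn Hrm] : (r <= n)%N /\ (r <= m)%N.
  by case: (eqVneq m n) => [e|ne]; [move: (Hmn2 e) | move: (Hmn1 (elimT negP ne \o introT eqP))]; lia.
have [s [t [K1 K2]]] := @Kperm R[i] m n r a Har Hrn Hrm Hwf.
have [E [F [HE HF Hd]]] := Hcl eps Heps.
exists (F^T *m perm_mx s), (perm_mx t^-1 *m E^T).
split.
- by rewrite unitmx_mul unitmx_tr HF unitmx_perm.
- by rewrite unitmx_mul unitmx_tr HE unitmx_perm.
move=> i j.
have T1 : F^T *m perm_mx s *m (Kpencil R[i] n m r (r - a)).1 *m (perm_mx t^-1 *m E^T)
   = (E *m (Kpencil R[i] m n r a).1 *m F)^T.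
  by rewrite !trmx_mul K1 row_permE col_permE !mulmxA.
have T2 : F^T *m perm_mx s *m (Kpencil R[i] n m r (r - a)).2 *m (perm_mx t^-1 *m E^T)
   = (E *m (Kpencil R[i] m n r a).2 *m F)^T.
  by rewrite !trmx_mul K2 row_permE col_permE !mulmxA.
rewrite T1 T2 /pencil_tr /= !trB_entry.
exact: Hd.
Qed.
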